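(* Let $\Delta$ be a local derivation of $\mathcal{S}$ with $\Delta(L_0)=\Delta(L_1)=0$. Then $\Delta(L_m)=0$ for all $m\in\mathbb{Z}$.
   Context: $\mathcal{S}$ is the centerless super Virasoro algebra: the Lie superalgebra over $\mathbb{C}$ with basis $\{L_m,G_n: m,n\in\mathbb{Z}\}$, $L_m$ even, $G_n$ odd, and brackets $[L_m,L_n]=(m-n)L_{m+n}$, $[L_m,G_r]=(\frac m2-r)G_{m+r}$, $[G_r,G_s]=2L_{r+s}$. A homogeneous linear map $D$ of parity $|D|$ is a derivation if $D([x,y])=[D(x),y]+(-1)^{|D||x|}[x,D(y)]$ for homogeneous $x,y$; derivations are sums of even and odd ones. A linear map $\Delta:\mathcal{S}\to\mathcal{S}$ is a local derivation if for every $x$ there is a derivation $D_x$ with $\Delta(x)=D_x(x)$. *)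

(* Defs.v *)
From HB Require Import structures.
From mathcomp Require Import all_boot all_order all_algebra.
From mathcomp Require Import boolp classical_sets functions cardinality fsbigop.
From mathcomp Require Import complex Rstruct.
Set Implicit Arguments. Unset Strict Implicit. Unset Printing Implicit Defensive.
Import Order.TTheory GRing.Theory Num.Theory.
Local Open Scope ring_scope.
Local Open Scope classical_set_scope.

Definition C : Type := (Rdefinitions.R)[i].

(* Ambient space: pairs (a, b) of coefficient families; a m is the coefficient
   of L_m (even part), b r the coefficient of G_r (odd part).  The centerless
   super Virasoro algebra S is the subspace of finitely supported pairs. *)
Definition V : Type := ((int -> C) * (int -> C))%type.

Definition vadd (x y : V) : V := (fun k => x.1 k + y.1 k, fun k => x.2 k + y.2 k).
Definition vscale (c : C) (x : V) : V := (fun k => c * x.1 k, fun k => c * x.2 k).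
Definition vzero : V := (fun _ => 0, fun _ => 0).

Definition inS (x : V) : Prop := finite_set [set k | x.1 k != 0 \/ x.2 k != 0].

Definition Lb (m : int) : V := (fun k => if k == m then 1 else 0, fun _ => 0).
Definition Gb (r : int) : V := (fun _ => 0, fun k => if k == r then 1 else 0).

(* homogeneity: parity false = even, true = odd *)
Definition homog (p : bool) (x : V) : Prop :=
  if p then forall k, x.1 k = 0 else forall k, x.2 k = 0.

(* The super bracket, extended bilinearly from
   [L_m,L_n]=(m-n)L_{m+n}, [L_m,G_r]=(m/2-r)G_{m+r}, [G_r,L_m]=-(m/2-r)G_{m+r},
   [G_r,G_s]=2L_{r+s}. Sums are finitely supported on elements of S. *)
Definition bracket (x y : V) : V :=
  (fun k => \sum_(m \in [set: int]) ((m - (k - m))%:~R * x.1 m * y.1 (k - m))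
            + \sum_(r \in [set: int]) (2 * x.2 r * y.2 (k - r)),
   fun k => \sum_(m \in [set: int]) ((m%:~R / 2 - (k - m)%:~R) * x.1 m * y.2 (k - m))
            - \sum_(r \in [set: int]) ((((k - r)%:~R / 2) - r%:~R) * x.2 r * y.1 (k - r))).

(* linear maps S -> S (given as maps on V, only their behaviour on S matters) *)
Definition linear_on_S (D : V -> V) : Prop :=
  [/\ forall x, inS x -> inS (D x),
      forall x y, inS x -> inS y -> D (vadd x y) = vadd (D x) (D y)
    & forall c x, inS x -> D (vscale c x) = vscale c (D x)].

Definition sgn (p q : bool) : C := if p && q then -1 else 1.

Definition homog_derivation (p : bool) (D : V -> V) : Prop :=
  [/\ linear_on_S D,
      forall q x, inS x -> homog q x -> homog (p (+) q) (D x)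
    & forall q q' x y, inS x -> inS y -> homog q x -> homog q' y ->
        D (bracket x y) = vadd (bracket (D x) y) (vscale (sgn p q) (bracket x (D y)))].

Definition derivation (D : V -> V) : Prop :=
  exists D0 D1, [/\ homog_derivation false D0, homog_derivation true D1
    & forall x, inS x -> D x = vadd (D0 x) (D1 x)].

Definition local_derivation (Delta : V -> V) : Prop :=
  linear_on_S Delta /\
  forall x, inS x -> exists D, derivation D /\ Delta x = D x.

(* Main.v *)
Require Import Defs.
From mathcomp Require Import all_boot all_algebra.
From mathcomp Require Import all_order.
From HB Require Import structures.
From mathcomp Require Import boolp classical_sets functions cardinality fsbigop.
From mathcomp Require Import complex Rstruct.
From mathcomp Require Import zify ring.
Set Implicit Arguments. Unset Strict Implicit. Unset Printing Implicit Defensive.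
Import Order.TTheory GRing.Theory Num.Theory.

Section Aux.
Local Open Scope ring_scope.
Local Open Scope classical_set_scope.

Lemma VE (x y : V) : (forall j, x.1 j = y.1 j) -> (forall j, x.2 j = y.2 j) -> x = y.
Proof.
case: x => x1 x2; case: y => y1 y2 /= h1 h2.
by rewrite (funext h1) (funext h2).
Qed.

Lemma fsum_single (F : int -> C) (a : int) :
  (forall i, i != a -> F i = 0) -> \sum_(i \in [set: int]) F i = F a.
Proof.
move=> h; rewrite -(fsbig_widen [set a] [set: int]) ?fsbig_set1 //.
move=> i [_ /=] /eqP nia; exact: h.
Qed.

Lemma fsum0 (F : int -> C) : (forall i, F i = 0) -> \sum_(i \in [set: int]) F i = 0.
Proof. by move=> h; apply: fsbig1 => i _; exact: h. Qed.

Lemma br_Lr (y : V) (n : int) : bracket y (Lb n) =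
  (fun j => ((j - n) - n)%:~R * y.1 (j - n),
   fun j => ((j - n)%:~R - n%:~R / 2) * y.2 (j - n)).
Proof.
apply: VE => j /=.
  rewrite (fsum_single (a := j - n)); last first.
    move=> i hi; case: ifP; last by rewrite mulr0.
    by move=> /eqP h; exfalso; move/eqP: hi; apply; lia.
  rewrite fsum0; last by move=> i; rewrite mulr0.
  by rewrite (_ : j - (j - n) = n) ?eqxx ?mulr1 ?addr0 //; lia.
rewrite fsum0; last by move=> i; rewrite mulr0.
rewrite (fsum_single (a := j - n)); last first.
  move=> i hi; case: ifP; last by rewrite mulr0.
  by move=> /eqP h; exfalso; move/eqP: hi; apply; lia.
rewrite (_ : j - (j - n) = n) ?eqxx ?mulr1; last by lia.
ring.
Qed.

Lemma br_Ll (y : V) (n : int) : bracket (Lb n) y =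
  (fun j => (n - (j - n))%:~R * y.1 (j - n),
   fun j => (n%:~R / 2 - (j - n)%:~R) * y.2 (j - n)).
Proof.
apply: VE => j /=.
  rewrite (fsum_single (a := n)); last first.
    by move=> i hi; rewrite (negbTE hi); ring.
  rewrite fsum0; last by move=> i; ring.
  by rewrite eqxx mulr1 addr0.
rewrite (fsum_single (a := n)); last first.
  by move=> i hi; rewrite (negbTE hi); ring.
rewrite fsum0; last by move=> i; ring.
by rewrite eqxx mulr1 subr0.
Qed.


Definition fsupp (f : int -> C) := exists N : nat, forall i : int, (N < `|i|)%N -> f i = 0.

Definition win (N : nat) : seq int := [seq (i%:Z - N%:Z) | i <- iota 0 (N + N).+1].

Lemma win_uniq N : uniq (win N).
Proof.
rewrite map_inj_uniq ?iota_uniq // => a b /= h.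
by apply/eqP; rewrite -(eqr_nat int) -subr_eq0 ; apply/eqP; lia.
Qed.

Lemma mem_win N (i : int) : (`|i| <= N)%N -> i \in win N.
Proof.
move=> hi; apply/mapP; exists (absz (i + N%:Z)).
  rewrite mem_iota /=; lia.
lia.
Qed.

Lemma fsum_win (f : int -> C) N : (forall i, (N < `|i|)%N -> f i = 0) ->
  \sum_(i \in [set: int]) f i = \sum_(i <- win N) f i.
Proof.
move=> h; rewrite (fsbig_seq _ _ (win_uniq N)).
apply/esym/fsbig_widen => // i [_ /= hi]; apply: h.
rewrite ltnNge; apply/negP => H; apply: hi; exact: mem_win.
Qed.

Lemma fsupp_le (f : int -> C) N M : (N <= M)%N -> (forall i, (N < `|i|)%N -> f i = 0) ->
  (forall i, (M < `|i|)%N -> f i = 0).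
Proof. by move=> le h i hi; apply: h; apply: leq_ltn_trans hi. Qed.

Lemma fsum_add (f g : int -> C) : fsupp f -> fsupp g ->
  \sum_(i \in [set: int]) (f i + g i) = \sum_(i \in [set: int]) f i + \sum_(i \in [set: int]) g i.
Proof.
move=> [N hN] [M hM].
have hN' := fsupp_le (leq_maxl N M) hN.
have hM' := fsupp_le (leq_maxr N M) hM.
rewrite (fsum_win hN') (fsum_win hM') (@fsum_win _ (maxn N M)) ?big_split //.
by move=> i hi; rewrite hN' ?hM' ?addr0.
Qed.

Lemma fsum_shift (f : int -> C) (c : int) :
  \sum_(i \in [set: int]) f i = \sum_(k \in [set: int]) f (k + c).
Proof.
apply: (reindex_fsbigT (fun k => k + c)).
by exists (fun k => k - c) => k /=; [rewrite addrK | rewrite subrK].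
Qed.

Lemma fsupp_shift (f g : int -> C) (c : int) : fsupp f -> fsupp (fun j => g j * f (j - c)).
Proof.
move=> [N hN]; exists (N + `|c|)%N => i hi.
by rewrite hN ?mulr0 //; lia.
Qed.

Lemma fsupp_mul (f g : int -> C) : fsupp f -> fsupp (fun j => g j * f j).
Proof.
move=> [N hN]; exists N => i hi; by rewrite hN ?mulr0.
Qed.

Lemma fsupp_addf (f g : int -> C) : fsupp f -> fsupp g -> fsupp (fun j => f j + g j).
Proof.
move=> [N hN] [M hM]; exists (maxn N M) => i hi.
by rewrite (fsupp_le (leq_maxl N M) hN) ?(fsupp_le (leq_maxr N M) hM) ?addr0.
Qed.

Lemma laurent0 (f : int -> C) : fsupp f ->
  (forall r : C, r != 0 -> \sum_(j \in [set: int]) r ^ j * f j = 0) ->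
  forall j, f j = 0.
Proof.
move=> [N hN] H.
pose P := \poly_(i < (N + N).+1) f (i%:Z - N%:Z).
have HP : forall r : C, r != 0 -> P.[r] = 0.
  move=> r r0; rewrite horner_poly.
  have := H r r0; rewrite (@fsum_win _ N); last by move=> i hi; rewrite hN ?mulr0.
  rewrite /win big_map => h.
  transitivity ((\sum_(i <- iota 0 (N + N).+1) r ^ (i%:Z - N%:Z) * f (i%:Z - N%:Z)) * r ^ (N%:Z)); last by rewrite h mul0r.
  rewrite mulr_suml.
  rewrite (_ : iota 0 _ = index_iota 0 (N + N).+1); last by rewrite /index_iota subn0.
  rewrite big_mkord; apply: eq_bigr => i _.
  rewrite [RHS]mulrC mulrA -expfzDr // (_ : N%:Z + (i%:Z - N%:Z) = i%:Z); last by lia.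
  by rewrite exprnP mulrC.
have P0 : P = 0.
  apply/eqP; apply/negPn/negP => Pn0.
  have := max_poly_roots Pn0 (rs := [seq (i.+1)%:R | i <- iota 0 (N + N).+1]).
  rewrite size_map size_iota.
  have -> : all (root P) [seq (i.+1)%:R | i <- iota 0 (N + N).+1].
    apply/allP => z /mapP [i _ ->]; apply/eqP/HP.
    by rewrite pnatr_eq0.
  have -> : uniq [seq (i.+1)%:R : C | i <- iota 0 (N + N).+1].
    rewrite map_inj_uniq ?iota_uniq // => a b /= /eqP; rewrite eqr_nat => /eqP [].
    done.
  move=> /(_ isT isT); rewrite ltnNge size_poly //.
move=> j; case: (leqP `|j| N) => hj; last exact: hN.
have := congr1 (fun p : {poly C} => p`_(absz (j + N%:Z))) P0.
rewrite coef_poly coef0 ifT; last by lia.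
by rewrite (_ : (absz (j + N%:Z))%:Z - N%:Z = j) //; lia.
Qed.


Lemma sum3 (f : int -> C) (m : int) (r : C) (cA cB cC : int -> C) : fsupp f ->
  (forall k, r ^ k * cA k + r ^ (k + 1) * cB (k + 1) + r ^ (k + m) * cC (k + m) = 0) ->
  \sum_(j \in [set: int]) r ^ j * (cA j * f j + cB j * f (j - 1) + cC j * f (j - m)) = 0.
Proof.
move=> hf h.
rewrite (eq_fsbigr (fun j => (r ^ j * cA j * f j + r ^ j * cB j * f (j - 1))
   + r ^ j * cC j * f (j - m))); last by move=> j _; ring.
have s1 : fsupp (fun j => r ^ j * cA j * f j) by exact: (fsupp_mul (fun j => r ^ j * cA j) hf).
have s2 : fsupp (fun j => r ^ j * cB j * f (j - 1)) by exact: (fsupp_shift (fun j => r ^ j * cB j) 1 hf).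
have s3 : fsupp (fun j => r ^ j * cC j * f (j - m)) by exact: (fsupp_shift (fun j => r ^ j * cC j) m hf).
rewrite fsum_add; last 2 first.
- exact: fsupp_addf.
- exact: s3.
rewrite fsum_add //.
rewrite (fsum_shift (fun j => r ^ j * cB j * f (j - 1)) 1).
rewrite (fsum_shift (fun j => r ^ j * cC j * f (j - m)) m).
rewrite (@eq_fsbigr _ _ _ _ (fun k => r ^ (k + 1) * cB (k + 1) * f (k + 1 - 1)) (fun k => r ^ (k + 1) * cB (k + 1) * f k)); last by move=> k _ /=; rewrite addrK.
rewrite (@eq_fsbigr _ _ _ _ (fun k => r ^ (k + m) * cC (k + m) * f (k + m - m)) (fun k => r ^ (k + m) * cC (k + m) * f k)); last by move=> k _ /=; rewrite addrK.
rewrite -fsum_add; last 2 first.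
- exact: s1.
- exact: (fsupp_mul (fun k => r ^ (k + 1) * cB (k + 1)) hf).
rewrite -fsum_add; last 2 first.
- apply: fsupp_addf; first exact: s1.
  exact: (fsupp_mul (fun k => r ^ (k + 1) * cB (k + 1)) hf).
- exact: (fsupp_mul (fun k => r ^ (k + m) * cC (k + m)) hf).
apply: fsum0 => k.
by rewrite -!mulrDl h mul0r.
Qed.


Lemma inS_fsupp x : inS x -> fsupp x.1 /\ fsupp x.2.
Proof.
move=> /finite_seqP [s hs].
have key : forall i, (\max_(j <- s) absz j < absz i)%N -> x.1 i = 0 /\ x.2 i = 0.
  move=> i hi.
  have : ~ [set k | x.1 k != 0 \/ x.2 k != 0] i.
    rewrite hs /= => his; move: hi; rewrite ltnNge.
    by rewrite (@leq_bigmax_seq _ s xpredT (fun j => absz j) i his).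
  move=> /not_orP [h1 h2]; split.
    by move/negP: h1; rewrite negbK => /eqP.
  by move/negP: h2; rewrite negbK => /eqP.
by split; exists (\max_(j <- s) absz j) => i /key [].
Qed.

Lemma fsupp_inS x : fsupp x.1 -> fsupp x.2 -> inS x.
Proof.
move=> [N hN] [M hM].
apply: (sub_finite_set _ (finite_seq (win (maxn N M)))) => i /= h.
apply: mem_win; rewrite leqNgt; apply/negP => hi.
case: h => /eqP; apply.
  exact: (fsupp_le (leq_maxl N M) hN).
exact: (fsupp_le (leq_maxr N M) hM).
Qed.

Lemma inS_Lb k : inS (Lb k).
Proof.
apply: fsupp_inS; last by exists 0%N.
exists (absz k) => i hi /=; case: ifP => // /eqP e; exfalso; rewrite e in hi.
by rewrite ltnn in hi.
Qed.

Lemma inS_vadd x y : inS x -> inS y -> inS (vadd x y).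
Proof.
move=> /inS_fsupp [x1 x2] /inS_fsupp [y1 y2].
by apply: fsupp_inS; apply: fsupp_addf.
Qed.

Lemma inS_vscale c x : inS x -> inS (vscale c x).
Proof.
move=> /inS_fsupp [x1 x2].
by apply: fsupp_inS; [exact: (fsupp_mul (fun _ => c) x1) | exact: (fsupp_mul (fun _ => c) x2)].
Qed.

Lemma br_LL k l : bracket (Lb k) (Lb l) = vscale (k - l)%:~R (Lb (k + l)).
Proof.
rewrite br_Ll; apply: VE => j /=; last by rewrite !mulr0.
case: ifP => /eqP h; case: ifP => /eqP h'; rewrite ?mulr0 ?mulr1 //.
- by congr (_%:~R); lia.
- exfalso; apply: h'; lia.
- exfalso; apply: h; lia.
Qed.

Lemma der_props D : derivation D ->
  [/\ forall x, inS x -> inS (D x),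
      forall x y, inS x -> inS y -> D (vadd x y) = vadd (D x) (D y),
      forall c x, inS x -> D (vscale c x) = vscale c (D x)
    & forall k l, D (bracket (Lb k) (Lb l)) =
         vadd (bracket (D (Lb k)) (Lb l)) (bracket (Lb k) (D (Lb l)))].
Proof.
case=> D0 [D1 [[[S0 A0 Z0] _ L0] [[S1 A1 Z1] _ L1] hD]].
split.
- by move=> x hx; rewrite hD //; apply: inS_vadd; [apply: S0 | apply: S1].
- move=> x y hx hy; rewrite (hD (vadd x y)); last exact: inS_vadd.
  rewrite (hD x) // (hD y) // A0 // A1 //.
  by apply: VE => j /=; ring.
- move=> c x hx; rewrite (hD (vscale c x)); last exact: inS_vscale.
  rewrite (hD x) // Z0 // Z1 //.
  by apply: VE => j /=; ring.
- move=> k l.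
  have hk := inS_Lb k; have hl := inS_Lb l.
  have hom : forall n, homog false (Lb n) by move=> n kk.
  rewrite hD; last by rewrite br_LL; apply: inS_vscale; exact: inS_Lb.
  rewrite (L0 false false) // (L1 false false) // !hD //.
  rewrite !br_Lr !br_Ll; apply: VE => j /=; ring.
Qed.


Lemma lin_from (a b c d k : C) : c = d -> a - b = k * (c - d) -> a = b.
Proof. by move=> -> h; apply/eqP; rewrite -subr_eq0 h subrr mulr0. Qed.

Lemma two_nz : (2 : C) != 0.
Proof. by rewrite pnatr_eq0. Qed.

Lemma inner D :
  (forall x, inS x -> inS (D x)) ->
  (forall c x, inS x -> D (vscale c x) = vscale c (D x)) ->
  (forall k l, D (bracket (Lb k) (Lb l)) =
       vadd (bracket (D (Lb k)) (Lb l)) (bracket (Lb k) (D (Lb l)))) ->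
  exists b, inS b /\ forall k, D (Lb k) = bracket b (Lb k).
Proof.
move=> HS Hs Hl.
pose y k := D (Lb k).
have E1 : forall k l j, (k - l)%:~R * (y (k + l)).1 j =
    ((j - l) - l)%:~R * (y k).1 (j - l) + (k - (j - k))%:~R * (y l).1 (j - k).
  move=> k l j; have := congr1 (fun z : V => z.1 j) (Hl k l).
  by rewrite br_LL Hs ?br_Lr ?br_Ll //; exact: inS_Lb.
have E2 : forall k l j, (k - l)%:~R * (y (k + l)).2 j =
    ((j - l)%:~R - l%:~R / 2) * (y k).2 (j - l) + (k%:~R / 2 - (j - k)%:~R) * (y l).2 (j - k).
  move=> k l j; have := congr1 (fun z : V => z.2 j) (Hl k l).
  by rewrite br_LL Hs ?br_Lr ?br_Ll //; exact: inS_Lb.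
have F1 : forall l j, (j - l)%:~R * (y l).1 j = (j - l - l)%:~R * (y 0).1 (j - l).
  move=> l j; have := E1 0 l j; rewrite !add0r !subr0 => h.
  by apply: (lin_from (k := 1) h); ring.
have F2 : forall l j, (j - l)%:~R * (y l).2 j = ((j - l)%:~R - l%:~R / 2) * (y 0).2 (j - l).
  move=> l j; have := E2 0 l j; rewrite !add0r !subr0 => h.
  by apply: (lin_from (k := 1) h); ring.
have c10 : (y 0).1 0 = 0.
  have := F1 1 1; rewrite subrr => h.
  by apply: (lin_from (k := 1) h); ring.
have c20 : (y 0).2 0 = 0.
  have := F2 1 1; rewrite subrr => h.
  by apply: (lin_from (k := 2) h); field.
pose a : V := (fun j => if j == 0 then 0 else (y 0).1 j / j%:~R,
               fun j => if j == 0 then 0 else (y 0).2 j / j%:~R).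
have O1 : forall l j, j != l -> (y l).1 j = (j - l - l)%:~R * a.1 (j - l).
  move=> l j ne; rewrite /a /= ifF; last by apply/negbTE; rewrite subr_eq0.
  have nz : (j - l)%:~R != 0 :> C by rewrite intr_eq0 subr_eq0.
  apply: (mulfI nz); rewrite F1 mulrCA [_ * (_ / _)]mulrC divfK //.
have O2 : forall l j, j != l -> (y l).2 j = ((j - l)%:~R - l%:~R / 2) * a.2 (j - l).
  move=> l j ne; rewrite /a /= ifF; last by apply/negbTE; rewrite subr_eq0.
  have nz : (j - l)%:~R != 0 :> C by rewrite intr_eq0 subr_eq0.
  apply: (mulfI nz); rewrite F2 mulrCA [_ * (_ / _)]mulrC divfK //.
pose mu k := (y k).1 k.
pose p k := (y k).2 k.
have R1 : forall k l, (k - l)%:~R * mu (k + l) = (k - l)%:~R * (mu k + mu l).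
  move=> k l; have := E1 k l (k + l).
  rewrite addrK (_ : k + l - k = l); last by ring.
  by move=> h; rewrite /mu h mulrDr.
have R2 : forall k l, (k - l)%:~R * p (k + l) =
    (k%:~R - l%:~R / 2) * p k + (k%:~R / 2 - l%:~R) * p l.
  move=> k l; have := E2 k l (k + l).
  by rewrite addrK (_ : k + l - k = l); last by ring.
have mu0 : mu 0 = 0 by exact: c10.
have p0 : p 0 = 0 by exact: c20.
have Mneg : forall k, mu (- k) = - mu k.
  move=> k; case: (eqVneq k 0) => [->|nz]; first by rewrite oppr0 mu0 oppr0.
  have nz2 : (k - - k)%:~R != 0 :> C by rewrite intr_eq0; apply/eqP; lia.
  have := R1 k (- k); rewrite addrN mu0 mulr0 => /esym/eqP.
  rewrite mulf_eq0 (negbTE nz2) /= addr_eq0 => /eqP ->.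
  by rewrite opprK.
have Pneg : forall k, p (- k) = - p k.
  move=> k; case: (eqVneq k 0) => [->|nz]; first by rewrite oppr0 p0 oppr0.
  have nz3 : (3 * k%:~R / 2) != 0 :> C.
    rewrite mulf_eq0 negb_or invr_eq0 two_nz mulf_eq0 negb_or intr_eq0 nz andbT.
    by rewrite pnatr_eq0.
  have := R2 k (- k); rewrite addrN p0 mulr0 => h.
  by apply: (mulfI nz3); apply: (lin_from (k := -1) h); field.
have Mpos : forall n : nat, mu (Posz n) = (Posz n)%:~R * mu 1.
  elim=> [|n IH]; first by rewrite mul0r; exact: mu0.
  case: n IH => [|n] IH.
    by change (Posz 1) with (1 : int); ring.
  case: n IH => [|n] IH.
    have := R1 2 (-1); rewrite Mneg (_ : 2 + -1 = 1); last by lia.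
    move=> h; have h' := mulfI _ h.
    have nz : ((2 : int) - -1)%:~R != 0 :> C by rewrite intr_eq0.
    have {}h' := h' nz.
    change (Posz 2) with (2 : int).
    by apply: (lin_from (k := -1) h'); ring.
  have := R1 (Posz n.+2) 1; rewrite (_ : Posz n.+2 + 1 = Posz n.+3); last by lia.
  have nz : (Posz n.+2 - 1)%:~R != 0 :> C by rewrite intr_eq0; apply/eqP; lia.
  move=> /(mulfI nz) h; rewrite h IH; ring.
have Ppos : forall n : nat, p (Posz n) = (Posz n)%:~R * p 1.
  elim=> [|n IH]; first by rewrite mul0r; exact: p0.
  case: n IH => [|n] IH.
    by change (Posz 1) with (1 : int); ring.
  case: n IH => [|n] IH.
    have := R2 2 (-1); rewrite Pneg (_ : 2 + -1 = 1); last by lia.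
    move=> h; change (Posz 2) with (2 : int).
    by apply: (lin_from (k := -2/5) h); field.
  have := R2 (Posz n.+2) 1; rewrite (_ : Posz n.+2 + 1 = Posz n.+3); last by lia.
  have nz : (Posz n.+2 - 1)%:~R != 0 :> C by rewrite intr_eq0; apply/eqP; lia.
  rewrite IH => h; apply: (mulfI nz).
  by apply: (lin_from (k := 1) h); ring.
have Mall : forall k, mu k = k%:~R * mu 1.
  case=> n; first exact: Mpos.
  rewrite NegzE Mneg Mpos; ring.
have Pall : forall k, p k = k%:~R * p 1.
  case=> n; first exact: Ppos.
  rewrite NegzE Pneg Ppos; ring.
pose b : V := (fun j => a.1 j + (if j == 0 then - mu 1 else 0),
               fun j => a.2 j + (if j == 0 then - (2 * p 1) else 0)).
exists b; split.
  have [[N hN] [M hM]] := inS_fsupp (HS _ (inS_Lb 0)).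
  apply: fsupp_inS.
    exists N => j hj /=.
    have j0 : j != 0 by apply/eqP => e; rewrite e in hj.
    by rewrite (negbTE j0) (hN j hj) mul0r addr0.
  exists M => j hj /=.
  have j0 : j != 0 by apply/eqP => e; rewrite e in hj.
  by rewrite (negbTE j0) (hM j hj) mul0r addr0.
move=> k; rewrite -/(y k); apply: VE => j; rewrite br_Lr /=.
  case: (eqVneq j k) => [->|ne].
    rewrite subrr eqxx /=; change ((y k).1 k) with (mu k); rewrite Mall; ring.
  have jk : (j - k == 0) = false by apply/negbTE; rewrite subr_eq0.
  by rewrite O1 // /a /= jk addr0.
case: (eqVneq j k) => [->|ne].
  by rewrite subrr eqxx /=; change ((y k).2 k) with (p k); rewrite Pall; field.
have jk : (j - k == 0) = false by apply/negbTE; rewrite subr_eq0.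
by rewrite O2 // /a /= jk addr0.
Qed.


Lemma main_aux (Delta : V -> V) :
  local_derivation Delta ->
  Delta (Lb 0) = vzero -> Delta (Lb 1) = vzero ->
  forall m : int, Delta (Lb m) = vzero.
Proof.
move=> [[SD AD ZD] Hloc] H0 H1 m.
case: (eqVneq m 0) => [->|m0]; first exact: H0.
case: (eqVneq m 1) => [->|m1]; first exact: H1.
have hv : inS (Delta (Lb m)) := SD _ (inS_Lb m).
have key : forall r : C, r != 0 ->
   (\sum_(j \in [set: int]) r ^ j * (Delta (Lb m)).1 j = 0) /\
   (\sum_(j \in [set: int]) r ^ j * (Delta (Lb m)).2 j = 0).
  move=> r r0.
  pose al := (m - 1)%:~R * r ^ m; pose be := - (m%:~R * r ^ m / r).
  pose x := vadd (vscale al (Lb 0)) (vadd (vscale be (Lb 1)) (Lb m)).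
  have h0 := inS_Lb 0; have h1 := inS_Lb 1; have hm := inS_Lb m.
  have hx : inS x by apply: inS_vadd; [exact: inS_vscale | apply: inS_vadd => //; exact: inS_vscale].
  have Dx : Delta x = Delta (Lb m).
    rewrite /x AD; [|exact: inS_vscale | apply: inS_vadd => //; exact: inS_vscale].
    rewrite AD; [|exact: inS_vscale | exact: hm].
    rewrite !ZD // H0 H1; apply: VE => j /=; ring.
  have [D [hD eD]] := Hloc x hx.
  have [DS DA DZ DL] := der_props hD.
  have [b [hb Db]] := inner DS DZ DL.
  have vE : Delta (Lb m) = vadd (vscale al (bracket b (Lb 0)))
        (vadd (vscale be (bracket b (Lb 1))) (bracket b (Lb m))).
    rewrite -Dx eD /x DA; [|exact: inS_vscale | apply: inS_vadd => //; exact: inS_vscale].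
    rewrite DA; [|exact: inS_vscale | exact: hm].
    by rewrite !DZ // !Db.
  have [f1 f2] := inS_fsupp hb.
  have rk1 : forall k, r ^ (k + 1) = r ^ k * r by move=> k; rewrite expfzDr // expr1z.
  have rkm : forall k, r ^ (k + m) = r ^ k * r ^ m by move=> k; rewrite expfzDr.
  rewrite vE !br_Lr /=; split.
    rewrite (eq_fsbigr (fun j => r ^ j * ((al * j%:~R) * b.1 j
        + (be * (j - 1 - 1)%:~R) * b.1 (j - 1) + (j - m - m)%:~R * b.1 (j - m)))); last first.
      by move=> j _; rewrite !subr0; ring.
    apply: sum3 => // k; rewrite rk1 rkm /al /be.
    by field.
  rewrite (eq_fsbigr (fun j => r ^ j * ((al * j%:~R) * b.2 j
      + (be * ((j - 1)%:~R - 1%:~R / 2)) * b.2 (j - 1) + ((j - m)%:~R - m%:~R / 2) * b.2 (j - m)))); last first.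
    by move=> j _; rewrite !subr0; ring.
  apply: sum3 => // k; rewrite rk1 rkm /al /be.
  by field.
have [g1 g2] := inS_fsupp hv.
apply: VE => j /=.
  by apply: (laurent0 g1) => r r0; case: (key r r0).
by apply: (laurent0 g2) => r r0; case: (key r r0).
Qed.

End Aux.

Theorem lemma3p3 (Delta : V -> V) :
  local_derivation Delta ->
  Delta (Lb 0) = vzero -> Delta (Lb 1) = vzero ->
  forall m : int, Delta (Lb m) = vzero.
Proof. exact: main_aux. Qed.
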